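(* Let $\mathcal{A}$ be the Weyl arrangement of type $A_3$, realized in $\mathbb{K}^3$ as the six hyperplanes $x=0$, $y=0$, $z=0$, $x=y$, $y=z$, $x=z$. Let $m$ be a multiplicity on $\mathcal{A}$ such that $(\mathcal{A},m)$ is unbalanced. Then the freeness of $(\mathcal{A},m)$ depends only on $L(\mathcal{A})$ together with the values $m(H)$, $H\in\mathcal{A}$. Precisely: let $(\mathcal{A}',m')$ be a multiarrangement in $\mathbb{K}^3$ and $\varphi:\mathcal{A}\to\mathcal{A}'$ a bijection such that $m'(\varphi(H))=m(H)$ for all $H$ and $\operatorname{codim}\bigcap_{H\in\mathcal{B}}H=\operatorname{codim}\bigcap_{H\in\mathcal{B}}\varphi(H)$ for every subset $\mathcal{B}\subseteq\mathcal{A}$. Then $(\mathcal{A},m)$ is free if and only if $(\mathcal{A}',m')$ is free.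
   Context: Let $\mathbb{K}$ be a field. A multiarrangement $(\mathcal{A},m)$ in $V=\mathbb{K}^3$ is a finite set $\mathcal{A}$ of linear hyperplanes, each $H$ with a fixed defining linear form $\alpha_H$, together with a multiplicity $m:\mathcal{A}\to\mathbb{Z}_{>0}$; write $|m|=\sum_H m(H)$. $L(\mathcal{A})$ is the set of intersections of subsets of $\mathcal{A}$. $(\mathcal{A},m)$ is free if $D(\mathcal{A},m)=\{\theta\in\mathrm{Der}_{\mathbb{K}}(\mathbb{K}[x,y,z]):\theta(\alpha_H)\in\alpha_H^{m(H)}\mathbb{K}[x,y,z]\ \forall H\}$ is a free module. A hyperplane $H_0$ is heavy if $2m(H_0)\ge|m|$, and $(\mathcal{A},m)$ is unbalanced if it has a heavy hyperplane. *)

(* Defs.v *)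
From HB Require Import structures.
From mathcomp Require Import all_boot all_order all_algebra.
From mathcomp Require Import mpoly.
Set Implicit Arguments. Unset Strict Implicit. Unset Printing Implicit Defensive.
Import GRing.Theory.
Local Open Scope ring_scope.

Section MultiArr.
Variable K : fieldType.

Definition S := {mpoly K[3]}.

(* A linear form on V = K^3 is a row vector a; its value at v : 'rV_3 is
   v *m a^T.  The hyperplane H = ker a, as a subspace (row space) of K^3. *)
Definition hyp (a : 'rV[K]_3) : 'M[K]_3 := kermx a^T.

Definition codim_cap (I : finType) (alpha : I -> 'rV[K]_3) (B : {set I}) : nat :=
  (3 - \rank (\bigcap_(i in B) hyp (alpha i))%MS)%N.

Definition linpoly (a : 'rV[K]_3) : S := \sum_(j < 3) (a 0 j)%:MP * 'X_j.

(* K-derivations of S: Der_K(S) is the free S-module on d/dx, d/dy, d/dz;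
   theta = \sum_j theta_j d/dX_j is stored as its coefficient triple. *)
Definition Der := 'I_3 -> S.

Definition der_app (theta : Der) (a : 'rV[K]_3) : S :=
  \sum_(j < 3) (a 0 j)%:MP * theta j.

Definition mdvd (p f : S) : Prop := exists q : S, f = p * q.

Definition is_multiarr (I : finType) (alpha : I -> 'rV[K]_3) (m : I -> nat) : Prop :=
  [/\ forall i, alpha i != 0,
      forall i j, i != j -> ~~ (hyp (alpha i) == hyp (alpha j))%MS
    & forall i, (0 < m i)%N].

Definition in_D (I : finType) (alpha : I -> 'rV[K]_3) (m : I -> nat) (theta : Der) : Prop :=
  forall i, mdvd (linpoly (alpha i) ^+ m i) (der_app theta (alpha i)).

Definition free_multiarr (I : finType) (alpha : I -> 'rV[K]_3) (m : I -> nat) : Prop :=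
  exists (n : nat) (b : 'I_n -> Der),
    [/\ forall k, in_D alpha m (b k),
        forall theta, in_D alpha m theta ->
          exists c : 'I_n -> S, forall j, theta j = \sum_(k < n) c k * b k j
      & forall c : 'I_n -> S,
          (forall j, \sum_(k < n) c k * b k j = 0) -> forall k, c k = 0].

Definition heavy (I : finType) (m : I -> nat) (H0 : I) : Prop :=
  (\sum_(i : I) m i <= 2 * m H0)%N.

Definition unbalanced (I : finType) (m : I -> nat) : Prop :=
  exists H0, heavy m H0.

Definition ev (j : 'I_3) : 'rV[K]_3 := delta_mx 0 j.
Definition A3 (i : 'I_6) : 'rV[K]_3 :=
  match val i with
  | 0 => ev 0
  | 1 => ev 1
  | 2 => ev 2%:R
  | 3 => ev 0 - ev 1
  | 4 => ev 1 - ev 2%:R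
  | _ => ev 0 - ev 2%:R
  end.

End MultiArr.

(* Main.v *)
Require Import Defs.
From HB Require Import structures.
From mathcomp Require Import all_boot all_order all_algebra.
From mathcomp Require Import mpoly ring zify.
Import GRing.Theory.
Local Open Scope ring_scope.
Set Implicit Arguments. Unset Strict Implicit.

Definition sig (K : fieldType) (G : 'M[K]_3) (p : S K) : S K :=
  comp_mpoly [tuple linpoly (row i G) | i < 3] p.

Lemma sigX (K : fieldType) (G : 'M[K]_3) (j : 'I_3) : sig G 'X_j = linpoly (row j G).
Proof. by rewrite /sig comp_mpolyXU -tnth_nth tnth_map tnth_ord_tuple. Qed.

Lemma sigC (K : fieldType) (G : 'M[K]_3) c : sig G c%:MP = c%:MP.
Proof. by rewrite /sig comp_mpolyC. Qed.

Lemma sigD (K : fieldType) (G : 'M[K]_3) p q : sig G (p + q) = sig G p + sig G q.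
Proof. by rewrite /sig raddfD. Qed.

Lemma sigM (K : fieldType) (G : 'M[K]_3) p q : sig G (p * q) = sig G p * sig G q.
Proof. by rewrite /sig rmorphM. Qed.

Lemma sig0 (K : fieldType) (G : 'M[K]_3) : sig G 0 = 0.
Proof. by rewrite /sig raddf0. Qed.

Lemma sigXn (K : fieldType) (G : 'M[K]_3) p k : sig G (p ^+ k) = sig G p ^+ k.
Proof. by rewrite /sig rmorphXn. Qed.

Lemma sig_sum (K : fieldType) (G : 'M[K]_3) (I : Type) (r : seq I) (F : I -> S K) :
  sig G (\sum_(i <- r) F i) = \sum_(i <- r) sig G (F i).
Proof. by rewrite /sig raddf_sum. Qed.

Lemma mpolyC_sum (K : fieldType) (I : Type) (r : seq I) (F : I -> K) :
  (\sum_(i <- r) F i)%:MP = \sum_(i <- r) (F i)%:MP :> S K.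
Proof. by apply: (big_morph _ (@mpolyCD _ _)); rewrite mpolyC0. Qed.

Lemma sig_lin (K : fieldType) (G : 'M[K]_3) a : sig G (linpoly a) = linpoly (a *m G).
Proof.
rewrite /linpoly sig_sum.
have -> : \sum_(j<3) sig G ((a 0 j)%:MP * 'X_j) =
   \sum_(j<3) \sum_(k<3) ((a 0 j * G j k)%:MP * 'X_k).
  apply: eq_bigr => j _; rewrite sigM sigC sigX /linpoly mulr_sumr.
  by apply: eq_bigr => k _; rewrite mxE mulrA mpolyCM.
rewrite exchange_big; apply: eq_bigr => k _.
by rewrite mxE mpolyC_sum mulr_suml.
Qed.

Lemma linpoly_delta (K : fieldType) (j : 'I_3) : linpoly (delta_mx 0 j) = 'X_j :> S K.
Proof.
rewrite /linpoly (bigD1 j) //= big1 ?addr0; first by rewrite mxE !eqxx mul1r.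
by move=> k /negbTE kj; rewrite mxE eqxx kj mpolyC0 mul0r.
Qed.

Lemma linpolyZ (K : fieldType) (c : K) a : linpoly (c *: a) = c%:MP * linpoly a.
Proof.
rewrite /linpoly mulr_sumr; apply: eq_bigr => j _.
by rewrite mxE mpolyCM mulrA.
Qed.

Lemma sig_comp (K : fieldType) (G N : 'M[K]_3) (GN : G *m N = 1%:M) p :
  sig N (sig G p) = p.
Proof.
rewrite {2}/sig comp_mpolyEX sig_sum.
rewrite [RHS](mpolyE p); apply: eq_bigr => m _.
rewrite -mul_mpolyC sigM sigC mul_mpolyC; congr (_ *: _).
rewrite comp_mpolyX /sig rmorph_prod /= mpolyXE_id; apply: eq_bigr => i _.
rewrite rmorphXn /= tnth_map tnth_ord_tuple.
have -> : comp_mpoly [tuple linpoly (row i0 N) | i0 < 3] (linpoly (row i G)) = sig N (linpoly (row i G)) by [].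
by rewrite sig_lin -row_mul GN row1 linpoly_delta.
Qed.

Definition T (K : fieldType) (G N : 'M[K]_3) (th : Der K) : Der K :=
  fun j => sig G (\sum_(k < 3) (N j k)%:MP * th k).

Lemma der_appZ (K : fieldType) (th : Der K) (c : K) a :
  der_app th (c *: a) = c%:MP * der_app th a.
Proof.
rewrite /der_app mulr_sumr; apply: eq_bigr => j _.
by rewrite mxE mpolyCM mulrA.
Qed.

Lemma der_appT (K : fieldType) (G N : 'M[K]_3) th a :
  der_app (T G N th) a = sig G (der_app th (a *m N)).
Proof.
rewrite /der_app /T.
have -> : \sum_(j < 3) (a 0 j)%:MP * sig G (\sum_(k < 3) (N j k)%:MP * th k) =
  sig G (\sum_(j < 3) \sum_(k < 3) (a 0 j * N j k)%:MP * th k).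
  rewrite sig_sum; apply: eq_bigr => j _; rewrite -(sigC G) -sigM mulr_sumr.
  by congr (sig G _); apply: eq_bigr => k _; rewrite mulrA mpolyCM.
rewrite exchange_big; congr (sig G _); apply: eq_bigr => k _.
by rewrite mxE mpolyC_sum mulr_suml.
Qed.

Lemma T_inv (K : fieldType) (G N : 'M[K]_3) (GN : G *m N = 1%:M) th j :
  T N G (T G N th) j = th j.
Proof.
rewrite /T.
have -> : \sum_(k < 3) (G j k)%:MP * sig G (\sum_(l < 3) (N k l)%:MP * th l) =
  sig G (\sum_(k < 3) \sum_(l < 3) (G j k * N k l)%:MP * th l).
  rewrite sig_sum; apply: eq_bigr => k _; rewrite -(sigC G) -sigM mulr_sumr.
  by congr (sig G _); apply: eq_bigr => l _; rewrite mulrA mpolyCM.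
rewrite sig_comp // exchange_big /=.
have -> : \sum_(l < 3) \sum_(k < 3) (G j k * N k l)%:MP * th l =
   \sum_(l < 3) ((G *m N) j l)%:MP * th l.
  by apply: eq_bigr => l _; rewrite -mulr_suml -mpolyC_sum mxE.
rewrite GN (bigD1 j) //= big1 ?addr0; first by rewrite mxE eqxx mpolyC1 mul1r.
by move=> l /negbTE lj; rewrite mxE eq_sym lj mpolyC0 mul0r.
Qed.

Lemma T_ext (K : fieldType) (G N : 'M[K]_3) th th2 :
  (forall k, th k = th2 k) -> forall j, T G N th j = T G N th2 j.
Proof.
by move=> h j; rewrite /T; congr (sig G _); apply: eq_bigr => k _; rewrite h.
Qed.

Lemma T_lin (K : fieldType) (G N : 'M[K]_3) n (c : 'I_n -> S K) (b : 'I_n -> Der K) j :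
  T G N (fun l => \sum_(k < n) c k * b k l) j = \sum_(k < n) sig G (c k) * T G N (b k) j.
Proof.
rewrite /T.
have -> : \sum_(l < 3) (N j l)%:MP * (\sum_(k < n) c k * b k l) =
   \sum_(k < n) c k * \sum_(l < 3) (N j l)%:MP * b k l.
  transitivity (\sum_(l < 3) \sum_(k < n) c k * ((N j l)%:MP * b k l)).
    by apply: eq_bigr => l _; rewrite mulr_sumr; apply: eq_bigr => k _; rewrite mulrCA.
  by rewrite exchange_big /=; apply: eq_bigr => k _; rewrite mulr_sumr.
rewrite sig_sum; apply: eq_bigr => k _; by rewrite sigM.
Qed.

Lemma T_zero (K : fieldType) (G N : 'M[K]_3) j : T G N (fun _ => 0) j = 0.
Proof.
by rewrite /T big1 ?sig0 // => k _; rewrite mulr0.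
Qed.

Lemma ring_aux (R : comNzRingType) (x y z w : R) k :
  x * y ^+ k * z * (x * w) ^+ k = (x * y) ^+ k * (x * w ^+ k * z).
Proof. rewrite !exprMn; move: (y ^+ k) (x ^+ k) (w ^+ k) => Y X W; ring. Qed.

Lemma memb_one (K : fieldType) (G N : 'M[K]_3) (GN : G *m N = 1%:M)
  (a a' : 'rV[K]_3) (c : K) (c0 : c != 0) (h : a' = c *: (a *m G)) (k : nat) th :
  mdvd (linpoly a ^+ k) (der_app th a) ->
  mdvd (linpoly a' ^+ k) (der_app (T G N th) a').
Proof.
case=> q hq; rewrite der_appT h -scalemxAl -mulmxA GN mulmx1 der_appZ hq.
rewrite sigM sigC sigM sigXn sig_lin linpolyZ.
exists ((c * c^-1 ^+ k)%:MP * sig G q).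
rewrite mpolyCM (rmorphXn (@mpolyC 3 K)) /=.
set L := linpoly (a *m G); set Q := sig G q.
transitivity (c%:MP * L^+k * Q * (c%:MP * (c^-1)%:MP)^+k).
  by rewrite -mpolyCM divff // mpolyC1 expr1n mulr1 mulrA.
exact: ring_aux.
Qed.

Lemma free_transfer (K : fieldType) (I I' : finType) (al : I -> 'rV[K]_3) (m : I -> nat)
  (al' : I' -> 'rV[K]_3) (m' : I' -> nat) (G N : 'M[K]_3)
  (GN : G *m N = 1%:M) (NG : N *m G = 1%:M)
  (h1 : forall i', exists i, exists c, [/\ c != 0, al' i' = c *: (al i *m G) & m' i' = m i])
  (h2 : forall i, exists i', exists c, [/\ c != 0, al i = c *: (al' i' *m N) & m i = m' i']) :
  free_multiarr al m -> free_multiarr al' m'.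
Proof.
case=> n [b [Hb1 Hb2 Hb3]].
have memb12 : forall th, in_D al m th -> in_D al' m' (T G N th).
  move=> th hth i'; have [i [c [c0 e1 e2]]] := h1 i'; rewrite e2.
  by apply: (memb_one GN c0 e1); apply: hth.
have memb21 : forall th, in_D al' m' th -> in_D al m (T N G th).
  move=> th hth i; have [i' [c [c0 e1 e2]]] := h2 i; rewrite e2.
  by apply: (memb_one NG c0 e1); apply: hth.
exists n, (fun k => T G N (b k)); split.
- by move=> k; apply: memb12.
- move=> th' hth'; have [c hc] := Hb2 _ (memb21 _ hth').
  exists (fun k => sig G (c k)) => j.
  rewrite -(T_inv NG th' j).
  rewrite (@T_ext _ G N (T N G th') (fun l => \sum_(k < n) c k * b k l) hc) T_lin.
  done.
- move=> c hc k.
  have h0 : forall j, \sum_(k < n) sig N (c k) * b k j = 0.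
    move=> j; rewrite -[RHS](T_zero N G j).
    rewrite -(@T_ext _ N G (fun l => \sum_(k < n) c k * T G N (b k) l) (fun _ => 0) hc) T_lin.
    by apply: eq_bigr => l _; rewrite T_inv.
  by have := Hb3 _ h0 k => /(congr1 (sig G)); rewrite sig_comp // sig0.
Qed.

Lemma trmx_mul0 (K : fieldType) p q (C : 'M[K]_(p, 3)) (A : 'M[K]_(q, 3)) :
  (C *m A^T == 0) = (A *m C^T == 0).
Proof.
apply/eqP/eqP => h.
  by rewrite -(trmxK A) -trmx_mul h trmx0.
by rewrite -(trmxK C) -trmx_mul h trmx0.
Qed.

Lemma codim_sum (K : fieldType) (I : finType) (f : I -> 'rV[K]_3) (B : {set I}) :
  codim_cap f B = \rank (\sum_(i in B) <<f i>>)%MS.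
Proof.
rewrite /codim_cap.
set Sm := (\sum_(i in B) <<f i>>)%MS.
have e : (\bigcap_(i in B) hyp (f i) :=: kermx Sm^T)%MS.
  apply/eqmxP/andP; split.
    rewrite sub_kermx trmx_mul0 -sub_kermx; apply/sumsmx_subP => i iB.
    rewrite genmxE sub_kermx trmx_mul0 -sub_kermx.
    by apply: (bigcapmx_inf i) => //; rewrite /hyp.
  apply/sub_bigcapmxP => i iB; rewrite /hyp sub_kermx.
  have : (f i <= Sm)%MS by apply: (sumsmx_sup i) => //; rewrite genmxE.
  case/submxP => D ->.
  by rewrite trmx_mul mulmxA mulmx_ker mul0mx.
rewrite e mxrank_ker mxrank_tr.
have := rank_leq_col Sm; lia.
Qed.

Definition sel (K : fieldType) (u v w : 'rV[K]_3) (a : nat) : 'rV[K]_3 :=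
  match a with 0 => u | 1 => v | _ => w end.

Definition R3 (K : fieldType) (u v w : 'rV[K]_3) : 'M[K]_3 :=
  \matrix_(a < 3, b < 3) sel u v w a 0 b.

Lemma rowR3 (K : fieldType) (u v w : 'rV[K]_3) (a : 'I_3) : row a (R3 u v w) = sel u v w a.
Proof. by apply/rowP => b; rewrite !mxE. Qed.

Lemma R3_mul (K : fieldType) (u v w : 'rV[K]_3) (A : 'M[K]_3) :
  R3 u v w *m A = R3 (u *m A) (v *m A) (w *m A).
Proof.
apply/row_matrixP => a; rewrite row_mul !rowR3.
by case: a => [[|[|[|//]]] ha].
Qed.

Lemma det3_aux (K : fieldType) (f : nat -> nat -> K) : \det (\matrix_(i < 3, j < 3) f i j) =
  f 0 0 * f 1 1 * f 2 2 - f 0 0 * f 1 2 * f 2 1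
 - f 0 1 * f 1 0 * f 2 2 + f 0 1 * f 1 2 * f 2 0
 + f 0 2 * f 1 0 * f 2 1 - f 0 2 * f 1 1 * f 2 0.
Proof.
rewrite (expand_det_row _ 0) !big_ord_recl big_ord0 /cofactor.
rewrite !(expand_det_row _ 0) !big_ord_recl !big_ord0 /cofactor !det_mx11 !mxE /=.
rewrite /bump /= !expr0 !expr1 /= expr2. ring.
Qed.

Lemma det_R3 (K : fieldType) (u v w : 'rV[K]_3) :
  let e := fun (x : 'rV[K]_3) (b : nat) => x 0 (inord b) in
  \det (R3 u v w) =
  e u 0%N * e v 1%N * e w 2%N - e u 0%N * e v 2%N * e w 1%N
 - e u 1%N * e v 0%N * e w 2%N + e u 1%N * e v 2%N * e w 0%N
 + e u 2%N * e v 0%N * e w 1%N - e u 2%N * e v 1%N * e w 0%N.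
Proof.
move=> e.
have -> : R3 u v w = \matrix_(i < 3, j < 3) e (sel u v w i) j.
  by apply/matrixP => i j; rewrite !mxE /e inord_val.
by rewrite (det3_aux (fun a b => e (sel u v w a) b)).
Qed.

Lemma rank3_det (K : fieldType) (M : 'M[K]_3) : (\rank M == 3)%N = (\det M != 0).
Proof. by rewrite -[(_ == _)%N]/(row_free M) row_free_unit unitmxE unitfE. Qed.

Lemma codim3 (K : fieldType) (f : 'I_6 -> 'rV[K]_3) (i j k : 'I_6) :
  codim_cap f [set i; j; k] = \rank (R3 (f i) (f j) (f k)).
Proof.
rewrite codim_sum; apply/eqP; rewrite eqn_leq; apply/andP; split; apply: mxrankS.
  apply/sumsmx_subP => l; rewrite !inE => /orP [/orP [] |] /eqP ->; rewrite genmxE.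
  - by move: (row_sub (0 : 'I_3) (R3 (f i) (f j) (f k))); rewrite rowR3.
  - by move: (row_sub (1 : 'I_3) (R3 (f i) (f j) (f k))); rewrite rowR3.
  - by move: (row_sub (2%:R : 'I_3) (R3 (f i) (f j) (f k))); rewrite rowR3.
apply/row_subP => a; rewrite rowR3.
case: a => [[|[|[|//]]] ha] /=.
- by apply: (sumsmx_sup i); rewrite ?genmxE // !inE eqxx.
- by apply: (sumsmx_sup j); rewrite ?genmxE // !inE eqxx ?orbT.
- by apply: (sumsmx_sup k); rewrite ?genmxE // !inE eqxx ?orbT.
Qed.

Notation o0 := (@Ordinal 6 0 isT).
Notation o1 := (@Ordinal 6 1 isT).
Notation o2 := (@Ordinal 6 2 isT).
Notation o3 := (@Ordinal 6 3 isT).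
Notation o4 := (@Ordinal 6 4 isT).
Notation o5 := (@Ordinal 6 5 isT).

Lemma evE (K : fieldType) (k : 'I_3) b : (b < 3)%N -> (@ev K k) 0 (inord b) = (val k == b)%:R.
Proof. by move=> hb; rewrite /ev mxE eqxx /= -val_eqE /= inordK // eq_sym. Qed.

Lemma subE (K : fieldType) (u v : 'rV[K]_3) b : (u - v) 0 b = u 0 b - v 0 b.
Proof. by rewrite !mxE. Qed.

Lemma scaleE (K : fieldType) (c : K) (u : 'rV[K]_3) b : (c *: u) 0 b = c * u 0 b.
Proof. by rewrite !mxE. Qed.

Lemma mulrow3 (K : fieldType) (u : 'rV[K]_3) (M : 'M[K]_3) j :
  (u *m M) 0 j = u 0 (inord 0) * M (inord 0) j + u 0 (inord 1) * M (inord 1) j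
                 + u 0 (inord 2) * M (inord 2) j.
Proof.
rewrite mxE !big_ord_recl big_ord0 addr0 addrA.
by congr (_ + _ + _); congr (u 0 _ * M _ j); apply/val_inj; rewrite /= inordK.
Qed.

Lemma R3E (K : fieldType) (u v w : 'rV[K]_3) a b : (a < 3)%N ->
  R3 u v w (inord a) b = sel u v w a 0 b.
Proof. by move=> ha; rewrite mxE inordK. Qed.

Lemma rV_eq (K : fieldType) (u v : 'rV[K]_3) :
  (forall b, (b < 3)%N -> u 0 (inord b) = v 0 (inord b)) -> u = v.
Proof.
by move=> h; apply/rowP => j; have := h j (ltn_ord j); rewrite inord_val.
Qed.

Lemma zl (K : fieldType) (c E F : K) : (c != 0) = (E != 0) -> c = 0 -> E = F -> F = 0.
Proof. by move=> h hc hE; apply/eqP; move: h; rewrite hc eqxx -hE => /esym/negbFE. Qed.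

Lemma nl (K : fieldType) (c E F : K) : (c != 0) = (E != 0) -> c ^+ 2 = 1 -> E = F -> F != 0.
Proof.
move=> h hc hE; rewrite -hE -h; apply/eqP => c0; move: hc; rewrite c0 expr0n /=.
by move/eqP; rewrite eq_sym oner_eq0.
Qed.


Lemma geom (K : fieldType) (a : 'I_6 -> 'rV[K]_3)
  (hB : forall B : {set 'I_6}, codim_cap (A3 K) B = codim_cap a B) :
  exists G : 'M[K]_3, exists c : 'I_6 -> K,
    G \in unitmx /\ forall i, c i != 0 /\ a i = c i *: (A3 K i *m G).
Proof.
have hT : forall i j k, (\det (R3 (A3 K i) (A3 K j) (A3 K k)) != 0) =
                        (\det (R3 (a i) (a j) (a k)) != 0).
  by move=> i j k; rewrite -!rank3_det -!codim3 hB.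
pose A := R3 (a o0) (a o1) (a o2).
have dA : \det A != 0.
  rewrite -hT det_R3 /A3 /= ?subE !evE //=.
  by apply: (@nl _ 1 1); [ | rewrite expr1n | ring].
have Au : A \in unitmx by rewrite unitmxE unitfE.
pose x i := a i *m invmx A.
have ha : forall i, a i = x i *m A by move=> i; rewrite /x mulmxKV.
have xr : forall k : 'I_3, x (inord k) = ev K k.
  move=> k; rewrite /x.
  have <- : row k A = a (inord k).
    rewrite rowR3; case: k => [[|[|[|//]]] hk] /=; congr (a _); by apply: val_inj; rewrite /= inordK.
  by rewrite -(row_mul k A (invmx A)) mulmxV // row1.
have x0 : x o0 = ev K 0 by rewrite -xr; congr (x _); by apply: val_inj; rewrite /= inordK.
have x1 : x o1 = ev K 1 by rewrite -xr; congr (x _); by apply: val_inj; rewrite /= inordK.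
have x2 : x o2 = ev K 2%:R by rewrite -xr; congr (x _); by apply: val_inj; rewrite /= inordK.
have hX : forall i j k, (\det (R3 (A3 K i) (A3 K j) (A3 K k)) != 0) =
                        (\det (R3 (x i) (x j) (x k)) != 0).
  by move=> i j k; rewrite hT (ha i) (ha j) (ha k) -R3_mul det_mulmx mulf_eq0 negb_or dA andbT.
pose xe (i : 'I_6) (b : nat) := x i 0 (inord b).
have w3 : xe o3 2%N = 0.
  have := hX o0 o1 o3; rewrite !det_R3 /A3 /= x0 x1 !subE !evE //= => F.
  by apply: (zl F); rewrite /xe; ring.
have w4 : xe o4 0%N = 0.
  have := hX o4 o1 o2; rewrite !det_R3 /A3 /= x2 x1 !subE !evE //= => F.
  by apply: (zl F); rewrite /xe; ring.
have w5 : xe o5 1%N = 0.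
  have := hX o0 o5 o2; rewrite !det_R3 /A3 /= x0 x2 !subE !evE //= => F.
  by apply: (zl F); rewrite /xe; ring.
have p0 : xe o3 0%N != 0.
  have := hX o3 o1 o2; rewrite !det_R3 /A3 /= x2 x1 !subE !evE //= => F.
  by apply: (nl F); rewrite /xe; ring.
have q0 : xe o3 1%N != 0.
  have := hX o0 o3 o2; rewrite !det_R3 /A3 /= x0 x2 !subE !evE //= => F.
  by apply: (nl F); rewrite /xe; ring.
have r0 : xe o4 1%N != 0.
  have := hX o0 o4 o2; rewrite !det_R3 /A3 /= x0 x2 !subE !evE //= => F.
  by apply: (nl F); rewrite /xe; ring.
have s0 : xe o4 2%N != 0.
  have := hX o0 o1 o4; rewrite !det_R3 /A3 /= x0 x1 !subE !evE //= => F.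
  by apply: (nl F); rewrite /xe; ring.
have t0 : xe o5 0%N != 0.
  have := hX o5 o1 o2; rewrite !det_R3 /A3 /= x2 x1 !subE !evE //= => F.
  by apply: (nl F); rewrite /xe; ring.
have u0 : xe o5 2%N != 0.
  have := hX o0 o1 o5; rewrite !det_R3 /A3 /= x0 x1 !subE !evE //= => F.
  by apply: (nl F); rewrite /xe; ring.
have rel : xe o3 0%N * xe o4 1%N * xe o5 2%N + xe o3 1%N * xe o4 2%N * xe o5 0%N = 0.
  have := hX o3 o4 o5; rewrite !det_R3 /A3 /= !subE !evE //= => F.
  apply: (zl F); first by ring.
  move: w3 w4 w5; rewrite /xe => -> -> ->; ring.
move: w3 w4 w5 p0 q0 r0 s0 t0 u0 rel; rewrite /xe => w3 w4 w5 p0 q0 r0 s0 t0 u0 rel.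
set p := x o3 0 (inord 0) in p0 rel *.
set q := x o3 0 (inord 1) in q0 rel *.
set r := x o4 0 (inord 1) in r0 rel *.
set s := x o4 0 (inord 2) in s0 rel *.
set t := x o5 0 (inord 0) in t0 rel *.
set u := x o5 0 (inord 2) in u0 rel *.
have hu : u = - (q * s * t) / (p * r).
  apply: (mulIf (mulf_neq0 p0 r0)); rewrite mulfVK ?mulf_neq0 //.
  by apply/eqP; rewrite -subr_eq0 opprK; apply/eqP; rewrite -rel; ring.
pose D := R3 (p *: ev K 0) ((- q) *: ev K 1) ((q * s / r) *: ev K 2%:R).
pose c (i : 'I_6) : K := match val i with
  0 => p^-1 | 1 => - q^-1 | 2 => r / (q * s) | 3 => 1 | 4 => - (r / q) | _ => t / p end.
have dD : \det D = p * (- q) * (q * s / r).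
  by rewrite /D det_R3 !scaleE !evE //=; ring.
exists (D *m A), c; split.
  rewrite unitmx_mul Au andbT unitmxE unitfE dD.
  by rewrite !mulf_neq0 ?oppr_eq0 ?invr_eq0.
have key : forall i, c i != 0 -> x i = c i *: (A3 K i *m D) ->
    c i != 0 /\ a i = c i *: (A3 K i *m (D *m A)).
  by move=> i ci hx; split => //; rewrite ha hx -scalemxAl mulmxA.
have k0 : c o0 != 0 /\ a o0 = c o0 *: (A3 K o0 *m (D *m A)).
{   apply: key; first by rewrite /c /= invr_eq0.
  apply: rV_eq => b; case: b => [|[|[|//]]] _; rewrite /c /A3 /= ?x0 ?x1 ?x2 [RHS]scaleE [in RHS]mulrow3 /D !R3E //= !scaleE ?subE !evE //=.
  all: rewrite -/p -/q -/r -/s -/t -/u ?w3 ?w4 ?w5 ?hu.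
  all: try match goal with |- ?l = ?r => change (@eq (GRing.Field.sort K) l r) end.
  all: field; by rewrite ?p0 ?q0 ?r0 ?s0 ?t0 ?u0. }
have k1 : c o1 != 0 /\ a o1 = c o1 *: (A3 K o1 *m (D *m A)).
{   apply: key; first by rewrite /c /= oppr_eq0 invr_eq0.
  apply: rV_eq => b; case: b => [|[|[|//]]] _; rewrite /c /A3 /= ?x0 ?x1 ?x2 [RHS]scaleE [in RHS]mulrow3 /D !R3E //= !scaleE ?subE !evE //=.
  all: rewrite -/p -/q -/r -/s -/t -/u ?w3 ?w4 ?w5 ?hu.
  all: try match goal with |- ?l = ?r => change (@eq (GRing.Field.sort K) l r) end.
  all: field; by rewrite ?p0 ?q0 ?r0 ?s0 ?t0 ?u0. }
have k2 : c o2 != 0 /\ a o2 = c o2 *: (A3 K o2 *m (D *m A)).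
{   apply: key; first by rewrite /c /= mulf_neq0 ?invr_eq0 ?mulf_neq0.
  apply: rV_eq => b; case: b => [|[|[|//]]] _; rewrite /c /A3 /= ?x0 ?x1 ?x2 [RHS]scaleE [in RHS]mulrow3 /D !R3E //= !scaleE ?subE !evE //=.
  all: rewrite -/p -/q -/r -/s -/t -/u ?w3 ?w4 ?w5 ?hu.
  all: try match goal with |- ?l = ?r => change (@eq (GRing.Field.sort K) l r) end.
  all: field; by rewrite ?p0 ?q0 ?r0 ?s0 ?t0 ?u0. }
have k3 : c o3 != 0 /\ a o3 = c o3 *: (A3 K o3 *m (D *m A)).
{   apply: key; first by rewrite /c /= oner_eq0.
  apply: rV_eq => b; case: b => [|[|[|//]]] _; rewrite /c /A3 /= ?x0 ?x1 ?x2 [RHS]scaleE [in RHS]mulrow3 /D !R3E //= !scaleE ?subE !evE //=.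
  all: rewrite -/p -/q -/r -/s -/t -/u ?w3 ?w4 ?w5 ?hu.
  all: try match goal with |- ?l = ?r => change (@eq (GRing.Field.sort K) l r) end.
  all: field; by rewrite ?p0 ?q0 ?r0 ?s0 ?t0 ?u0. }
have k4 : c o4 != 0 /\ a o4 = c o4 *: (A3 K o4 *m (D *m A)).
{   apply: key; first by rewrite /c /= oppr_eq0 mulf_neq0 ?invr_eq0.
  apply: rV_eq => b; case: b => [|[|[|//]]] _; rewrite /c /A3 /= ?x0 ?x1 ?x2 [RHS]scaleE [in RHS]mulrow3 /D !R3E //= !scaleE ?subE !evE //=.
  all: rewrite -/p -/q -/r -/s -/t -/u ?w3 ?w4 ?w5 ?hu.
  all: try match goal with |- ?l = ?r => change (@eq (GRing.Field.sort K) l r) end.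
  all: field; by rewrite ?p0 ?q0 ?r0 ?s0 ?t0 ?u0. }
have k5 : c o5 != 0 /\ a o5 = c o5 *: (A3 K o5 *m (D *m A)).
{   apply: key; first by rewrite /c /= mulf_neq0 ?invr_eq0.
  apply: rV_eq => b; case: b => [|[|[|//]]] _; rewrite /c /A3 /= ?x0 ?x1 ?x2 [RHS]scaleE [in RHS]mulrow3 /D !R3E //= !scaleE ?subE !evE //=.
  all: rewrite -/p -/q -/r -/s -/t -/u ?w3 ?w4 ?w5 ?hu.
  all: try match goal with |- ?l = ?r => change (@eq (GRing.Field.sort K) l r) end.
  all: field; by rewrite ?p0 ?q0 ?r0 ?s0 ?t0 ?u0. }
move=> i; case: i => [[|[|[|[|[|[|//]]]]]] hi].
- by rewrite (_ : Ordinal hi = o0) //; apply: val_inj.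
- by rewrite (_ : Ordinal hi = o1) //; apply: val_inj.
- by rewrite (_ : Ordinal hi = o2) //; apply: val_inj.
- by rewrite (_ : Ordinal hi = o3) //; apply: val_inj.
- by rewrite (_ : Ordinal hi = o4) //; apply: val_inj.
- by rewrite (_ : Ordinal hi = o5) //; apply: val_inj.
Qed.

Unset Implicit Arguments.

Theorem corollary1p4 (K : fieldType) (m : 'I_6 -> nat)
  (I' : finType) (alpha' : I' -> 'rV[K]_3) (m' : I' -> nat) (phi : 'I_6 -> I') :
  is_multiarr (@A3 K) m ->
  unbalanced m ->
  is_multiarr alpha' m' ->
  bijective phi ->
  (forall H, m' (phi H) = m H) ->
  (forall B : {set 'I_6}, codim_cap (@A3 K) B = codim_cap (fun H => alpha' (phi H)) B) ->
  (free_multiarr (@A3 K) m <-> free_multiarr alpha' m').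
Proof.
move=> _ _ _ [psi phiK psiK] hm hB.
have [G [c [Gu hc]]] := geom hB.
set N := invmx G.
have GN : G *m N = 1%:M by rewrite /N mulmxV.
have NG : N *m G = 1%:M by rewrite /N mulVmx.
have h1 : forall i', exists i, exists c0 : K,
    [/\ c0 != 0, alpha' i' = c0 *: (A3 K i *m G) & m' i' = m i].
  move=> i'; exists (psi i'), (c (psi i')).
  have [c0 e] := hc (psi i'); rewrite psiK in e.
  by split => //; rewrite -hm psiK.
have h2 : forall i, exists i', exists c0 : K,
    [/\ c0 != 0, A3 K i = c0 *: (alpha' i' *m N) & m i = m' i'].
  move=> i; exists (phi i), (c i)^-1.
  have [c0 e] := hc i.
  split; first by rewrite invr_eq0.
    by rewrite e -scalemxAl -mulmxA GN mulmx1 scalerA mulVf // scale1r.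
  by rewrite hm.
split.
  exact: (free_transfer GN NG h1 h2).
exact: (free_transfer NG GN h2 h1).
Qed.
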